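(* Fix one of the two variants $\sharp\in\{\text{lumped},\text{exact}\}$ described in the context. Let $\vec X^m\in\underline V^h_{\partial_0}$ satisfy assumption $(\mathfrak A)$ and assumption $(\mathfrak C)_\sharp$, and let $\Delta t_m>0$. Then there exists a unique pair $(\delta\vec X^{m+1},\kappa^{m+1})\in\underline V^h_\partial\times W_\sharp$ such that, with $\vec X^{m+1}=\vec X^m+\delta\vec X^{m+1}$, $$\Big(\vec X^m\cdot\vec e_1\,\tfrac{\vec X^{m+1}-\vec X^m}{\Delta t_m},\chi\,\vec\nu^m|\vec X^m_\rho|\Big)_\sharp=\Big(\vec X^m\cdot\vec e_1\,\kappa^{m+1},\chi\,|\vec X^m_\rho|\Big)_\sharp\quad\forall\,\chi\in W_\sharp,$$ $$\Big(\vec X^m\cdot\vec e_1\,\kappa^{m+1}\vec\nu^m,\vec\eta\,|\vec X^m_\rho|\Big)_\sharp+\big(\vec\eta\cdot\vec e_1,|\vec X^m_\rho|\big)+\Big((\vec X^m\cdot\vec e_1)\vec X^{m+1}_\rho,\vec\eta_\rho|\vec X^m_\rho|^{-1}\Big)=-\sum_{i=1}^2\sum_{p\in\partial_iI}\widehat\varrho^{(p)}(\vec X^m(p)\cdot\vec e_1)\,\vec\eta(p)\cdot\vec e_{3-i}\quad\forall\,\vec\eta\in\underline V^h_\partial .$$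
   Context: Setup. $\vec e_1=(1,0)^T$, $\vec e_2=(0,1)^T$; ''$\cdot$'' is the Euclidean inner product. $I$ is either the periodic interval $\mathbb R/\mathbb Z$ (with $\partial I=\emptyset$) or $I=(0,1)$ (with $\partial I=\{0,1\}$). $\partial I=\partial_DI\cup\partial_0I\cup\partial_1I\cup\partial_2I$ is a given disjoint partition, and $\widehat\varrho^{(p)}\in\mathbb R$, $p\in\{0,1\}$, are given constants with $|\widehat\varrho^{(p)}|\le1$. Let $J\ge3$, $h=1/J$, $q_j=jh$ ($j=0,\dots,J$; $q_0=q_J$ identified in the periodic case). $V^h$ is the space of continuous functions on $\overline I$ (periodic if $I=\mathbb R/\mathbb Z$) that are affine on each $[q_{j-1},q_j]$; $\underline V^h=[V^h]^2$; $\underline V^h_{\partial_0}=\{\vec\eta\in\underline V^h:\vec\eta(\rho)\cdot\vec e_1=0\ \forall\rho\in\partial_0I\}$; $\underline V^h_\partial=\{\vec\eta\in\underline V^h_{\partial_0}:\vec\eta(\rho)\cdot\vec e_i=0\ \forall\rho\in\partial_iI,\ i=1,2;\ \vec\eta(\rho)=\vec0\ \forall\rho\in\partial_DI\}$; $W^h_{\partial_0}=\{\chi\in V^h:\chi(\rho)=0\ \forall\rho\in\partial_0I\}$. $(\cdot,\cdot)$ is the $L^2(I)$ inner product (with dot product for vector functions), and for piecewise continuous $f,g$ the mass-lumped product is $(f,g)^h=\tfrac h2\sum_{j=1}^J[(fg)(q_j^-)+(fg)(q_{j-1}^+)]$. Two variants: in the ''lumped'' variant $(\cdot,\cdot)_\sharp=(\cdot,\cdot)^h$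 and $W_\sharp=W^h_{\partial_0}$; in the ''exact'' variant $(\cdot,\cdot)_\sharp=(\cdot,\cdot)$ and $W_\sharp=V^h$. For $\vec X^m\in\underline V^h_{\partial_0}$ with $|\vec X^m_\rho|>0$ a.e., set $\vec\nu^m=-[\vec X^m_\rho]^\perp/|\vec X^m_\rho|$, where $(a,b)^\perp=(b,-a)$. Assumption $(\mathfrak A)$: $|\vec X^m_\rho|>0$ a.e. on $I$ and $\vec X^m(\rho)\cdot\vec e_1>0$ for all $\rho\in\overline I\setminus\partial_0I$. Assumption $(\mathfrak C)_\sharp$: the set $\{((\vec X^m\cdot\vec e_1)\vec\nu^m,\chi|\vec X^m_\rho|)_\sharp:\chi\in W_\sharp\}\subset\mathbb R^2$ spans $\mathbb R^2$. *)

(* Defs.v *)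
(* Real numbers are modelled by an arbitrary real closed
   field R : rcfType (all quantities are algebraic: products, sums, square
   roots, and integrals of piecewise polynomials on a uniform mesh). *)
From HB Require Import structures.
From mathcomp Require Import all_boot all_order all_algebra.
Set Implicit Arguments. Unset Strict Implicit. Unset Printing Implicit Defensive.
Import Order.TTheory GRing.Theory Num.Theory.
Local Open Scope ring_scope.

(* I = R/Z (periodic) or I = (0,1) *)
Inductive domain := Periodic | Interval.
(* which part of the partition of dI a boundary point belongs to *)
Inductive bctype := BD | B0 | B1 | B2.
(* lumped (mass lumping, W = W^h_{d0}) or exact (L2 product, W = V^h) *)
Inductive variant := Lumped | Exact.

Definition bctype_eqb (a b : bctype) : bool :=
  match a, b with
  | BD, BD | B0, B0 | B1, B1 | B2, B2 => true | _, _ => false end.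

Section FE.
Variable R : rcfType.
Variable J : nat.
(* A (scalar) function of V^h is given by its nodal values at q_j = j/J,
   j = 0..J (in the periodic case q_0 and q_J are identified). *)
Definition nodal := 'I_J.+1 -> R.

Definition ep (p : bool) : 'I_J.+1 := if p then ord_max else ord0.

Definition inbd (dom : domain) (bc : bool -> bctype) (i : bctype) (p : bool) : bool :=
  match dom with Periodic => false | Interval => bctype_eqb (bc p) i end.

Definition inV (dom : domain) (f : nodal) : Prop :=
  dom = Periodic -> f ord0 = f ord_max.

Definition inVd0 dom bc (f1 f2 : nodal) : Prop :=
  inV dom f1 /\ inV dom f2 /\ (forall p, inbd dom bc B0 p -> f1 (ep p) = 0).

Definition inVd dom bc (f1 f2 : nodal) : Prop :=
  inVd0 dom bc f1 f2 /\
  (forall p, inbd dom bc B1 p -> f1 (ep p) = 0) /\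
  (forall p, inbd dom bc B2 p -> f2 (ep p) = 0) /\
  (forall p, inbd dom bc BD p -> f1 (ep p) = 0 /\ f2 (ep p) = 0).

Definition inWd0 dom bc (f : nodal) : Prop :=
  inV dom f /\ (forall p, inbd dom bc B0 p -> f (ep p) = 0).

Definition inW (v : variant) dom bc (f : nodal) : Prop :=
  match v with Lumped => inWd0 dom bc f | Exact => inV dom f end.

Definition nd (f : nodal) (j : nat) : R := f (inord j).

(* restriction of f to the element [q_k, q_{k+1}] (k < J), as a polynomial in
   the local coordinate s in [0,1], rho = q_k + s h *)
Definition loc (f : nodal) (k : nat) : {poly R} :=
  (nd f k)%:P + (nd f k.+1 - nd f k) *: 'X.

Definition der (f : nodal) (k : nat) : R := (nd f k.+1 - nd f k) * J%:R.

Definition nrm (X1 X2 : nodal) (k : nat) : R :=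
  Num.sqrt (der X1 k ^+ 2 + der X2 k ^+ 2).

(* nu = - [X_rho]^perp / |X_rho|, (a,b)^perp = (b,-a) *)
Definition nu1 (X1 X2 : nodal) (k : nat) : R := - der X2 k / nrm X1 X2 k.
Definition nu2 (X1 X2 : nodal) (k : nat) : R := der X1 k / nrm X1 X2 k.

Definition int01 (p : {poly R}) : R := \sum_(i < size p) p`_i / (i.+1)%:R.

(* exact L2 product: given the restrictions P k of the (piecewise polynomial)
   integrand f.g to the elements, (f,g) = sum_k h * int_0^1 P k *)
Definition ipE (P : nat -> {poly R}) : R :=
  \sum_(k < J) (J%:R)^-1 * int01 (P k).

(* mass-lumped product: (f,g)^h = h/2 sum_k [(fg)(q_{k+1}^-) + (fg)(q_k^+)] *)
Definition ipL (P : nat -> {poly R}) : R :=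
  \sum_(k < J) (J%:R)^-1 / 2%:R * ((P k).[1] + (P k).[0]).

Definition ipS (v : variant) (P : nat -> {poly R}) : R :=
  match v with Lumped => ipL P | Exact => ipE P end.

Definition assumA dom bc (X1 X2 : nodal) : Prop :=
  (forall k, (k < J)%N -> 0 < nrm X1 X2 k) /\
  (forall k s, (k < J)%N -> 0 <= s <= 1 ->
     ~ ((k = 0%N /\ s = 0 /\ inbd dom bc B0 false) \/
        (k = J.-1 /\ s = 1 /\ inbd dom bc B0 true)) ->
     0 < (loc X1 k).[s]).

Definition cvec (v : variant) (X1 X2 chi : nodal) : R * R :=
  (ipS v (fun k => loc X1 k * (nu1 X1 X2 k)%:P * loc chi k * (nrm X1 X2 k)%:P),
   ipS v (fun k => loc X1 k * (nu2 X1 X2 k)%:P * loc chi k * (nrm X1 X2 k)%:P)).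

Definition assumC v dom bc (X1 X2 : nodal) : Prop :=
  forall a b : R, exists (n : nat) (c : 'I_n -> R) (chis : 'I_n -> nodal),
    (forall i, inW v dom bc (chis i)) /\
    a = \sum_(i < n) c i * (cvec v X1 X2 (chis i)).1 /\
    b = \sum_(i < n) c i * (cvec v X1 X2 (chis i)).2.

Definition scheme v dom bc (rh : bool -> R) (dt : R)
  (X1 X2 dX1 dX2 kap : nodal) : Prop :=
  let Xn1 : nodal := fun i => X1 i + dX1 i in
  let Xn2 : nodal := fun i => X2 i + dX2 i in
  (forall chi, inW v dom bc chi ->
     ipS v (fun k => loc X1 k *
              ((loc Xn1 k - loc X1 k) * (dt^-1 * nu1 X1 X2 k)%:P
             + (loc Xn2 k - loc X2 k) * (dt^-1 * nu2 X1 X2 k)%:P)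
              * loc chi k * (nrm X1 X2 k)%:P)
   = ipS v (fun k => loc X1 k * loc kap k * loc chi k * (nrm X1 X2 k)%:P)) /\
  (forall eta1 eta2, inVd dom bc eta1 eta2 ->
     ipS v (fun k => loc X1 k * loc kap k *
              ((nu1 X1 X2 k)%:P * loc eta1 k + (nu2 X1 X2 k)%:P * loc eta2 k)
              * (nrm X1 X2 k)%:P)
   + ipE (fun k => loc eta1 k * (nrm X1 X2 k)%:P)
   + ipE (fun k => loc X1 k *
              ((der Xn1 k * der eta1 k + der Xn2 k * der eta2 k)
                 / nrm X1 X2 k)%:P)
   = - \sum_(p : bool)
         ((if inbd dom bc B1 p then rh p * X1 (ep p) * eta2 (ep p) else 0)
        + (if inbd dom bc B2 p then rh p * X1 (ep p) * eta1 (ep p) else 0))).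

End FE.

(* Main.v *)
Require Import Defs.
From HB Require Import structures.
From mathcomp Require Import all_boot all_order all_algebra.
From mathcomp Require Import ring lra.
From Stdlib Require Import FunctionalExtensionality.
Import Order.TTheory GRing.Theory Num.Theory.
Local Open Scope ring_scope.
Set Implicit Arguments.

Lemma lin_sum_R (R : fieldType) N (f : 'rV[R]_N -> R) (I : finType) (c : I -> R) (e : I -> 'rV_N) :
  (forall a x y, f (a *: x + y) = a * f x + f y) ->
  f (\sum_i c i *: e i) = \sum_i c i * f (e i).
Proof.
move=> Hf.
have f0 : f 0 = 0.
  have := Hf 1 0 0; rewrite scale1r addr0 mul1r => H.
  by apply: (@addrI _ (f 0)); rewrite addr0 -H.
apply: (big_ind2 (fun x y => f x = y)) => //.
  by move=> x1 x2 y1 y2 <- <-; rewrite -{1}(scale1r x1) Hf mul1r.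
by move=> i _; rewrite -[c i *: e i]addr0 Hf f0 addr0.
Qed.

Lemma lin_sum_V (R : fieldType) N M (f : 'rV[R]_N -> 'rV[R]_M) (I : finType) (c : I -> R) (e : I -> 'rV_N) :
  (forall a x y, f (a *: x + y) = a *: f x + f y) ->
  f (\sum_i c i *: e i) = \sum_i c i *: f (e i).
Proof.
move=> Hf.
have f0 : f 0 = 0.
  have := Hf 1 0 0; rewrite scale1r addr0 scale1r => H.
  by apply: (@addrI _ (f 0)); rewrite addr0 -H.
apply: (big_ind2 (fun x y => f x = y)) => //.
  by move=> x1 x2 y1 y2 <- <-; rewrite -{1}(scale1r x1) Hf scale1r.
by move=> i _; rewrite -[c i *: e i]addr0 Hf f0 addr0.
Qed.

Lemma gen_exist (R : fieldType) (N M : nat) (B : 'rV[R]_N -> 'rV[R]_N -> R)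
  (L : 'rV[R]_N -> R) (G : 'rV[R]_N -> 'rV[R]_M) :
  (forall a x y w, B (a *: x + y) w = a * B x w + B y w) ->
  (forall a x w z, B x (a *: w + z) = a * B x w + B x z) ->
  (forall a w z, L (a *: w + z) = a * L w + L z) ->
  (forall a x y, G (a *: x + y) = a *: G x + G y) ->
  (forall u, G u = 0 -> (forall w, G w = 0 -> B u w = 0) -> u = 0) ->
  exists u, G u = 0 /\ forall w, G w = 0 -> B u w = L w.
Proof.
move=> B1 B2 HL HG Hinj.
pose Gm : 'M_(N, M) := \matrix_(i, j) G (delta_mx 0 i) 0 j.
have GE : forall x, G x = x *m Gm.
  move=> x; rewrite mulmx_sum_row {1}(row_sum_delta x) (@lin_sum_V _ _ _ G _ _ _ HG).
  apply: eq_bigr => i _; congr (_ *: _); apply/rowP => j; by rewrite !mxE.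
pose E := row_base (kermx Gm).
have EG : forall y, G (y *m E) = 0.
  move=> y; rewrite GE; apply/sub_kermxP.
  by apply: (submx_trans (submxMl _ _)); rewrite /E eq_row_base.
have GEx : forall w, G w = 0 -> exists z, w = z *m E.
  move=> w; rewrite GE => /sub_kermxP; rewrite -(eq_row_base (kermx Gm)) => /submxP [z ->].
  by exists z.
pose A : 'M_(\rank (kermx Gm)) := \matrix_(i, j) B (row i E) (row j E).
have BA : forall y j, B (y *m E) (row j E) = (y *m A) 0 j.
  move=> y j; rewrite mulmx_sum_row (lin_sum_R (fun x => B x (row j E))) ?mxE.
    by apply: eq_bigr => i _; rewrite mxE.
  by move=> a x z; rewrite B1.
have Bw : forall x z, B x (z *m E) = \sum_j z 0 j * B x (row j E).
  by move=> x z; rewrite mulmx_sum_row (lin_sum_R (B x)).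
have Afree : row_free A.
  apply/inj_row_free => y Hy.
  have : y *m E = 0.
    apply: Hinj => // w /GEx [z ->]; rewrite Bw big1 // => j _.
    by rewrite BA Hy mxE mulr0.
  by move/eqP; rewrite mulmx_free_eq0 ?row_base_free // => /eqP.
move: Afree; rewrite row_free_unit => Au.
pose l : 'rV_(\rank (kermx Gm)) := \row_j L (row j E).
exists ((l *m invmx A) *m E); split => // w /GEx [z ->].
rewrite Bw [X in L X]mulmx_sum_row (lin_sum_R L) //; apply: eq_bigr => j _.
by rewrite BA mulmxKV // mxE.
Qed.

Section Basic.
Variables (R : rcfType) (J : nat).
Implicit Types (f g h : nodal R J).

Lemma loc_lin a f g h k : (forall i, h i = a * f i + g i) ->
  loc h k = a%:P * loc f k + loc g k.
Proof.
move=> H; rewrite /loc /nd !H -!mul_polyC !(rmorphD, rmorphB, rmorphM) /=; ring.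
Qed.

Lemma der_lin a f g h k : (forall i, h i = a * f i + g i) ->
  der h k = a * der f k + der g k.
Proof. by move=> H; rewrite /der /nd !H; ring. Qed.

Lemma loc0 f k : (forall i, f i = 0) -> loc f k = 0.
Proof. by move=> H; rewrite /loc /nd !H subrr scale0r addr0. Qed.

Lemma der0 f k : (forall i, f i = 0) -> der f k = 0.
Proof. by move=> H; rewrite /der /nd !H subrr mul0r. Qed.

Lemma int01_ge n (p : {poly R}) : (size p <= n)%N ->
  int01 p = \sum_(i < n) p`_i / i.+1%:R.
Proof.
move=> H; rewrite /int01 (big_ord_widen n (fun i => p`_i / i.+1%:R) H).
rewrite big_mkcond /=; apply: eq_bigr => i _; case: ifP => // /negbT.
by rewrite -leqNgt => Hi; rewrite nth_default // mul0r.
Qed.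

Arguments int01_ge [n p].

Lemma int01_lin a (p q r : {poly R}) : r = a%:P * p + q ->
  int01 r = a * int01 p + int01 q.
Proof.
move=> ->; set n := maxn (size p) (size q).
have Hp : (size p <= n)%N by rewrite leq_maxl.
have Hq : (size q <= n)%N by rewrite leq_maxr.
have Hr : (size (a%:P * p + q)%R <= n)%N.
  apply: leq_trans (size_polyD _ _) _; rewrite geq_max Hq andbT mul_polyC.
  exact: leq_trans (size_scale_leq _ _) Hp.
rewrite !(int01_ge Hp, int01_ge Hq, int01_ge Hr) mulr_sumr -big_split /=.
by apply: eq_bigr => i _; rewrite coefD coefCM mulrA mulrDl.
Qed.

Arguments int01_lin [a p q r].

Lemma int01_Xn i : int01 ('X^i : {poly R}) = i.+1%:R^-1.
Proof.
rewrite /int01 size_polyXn big_ord_recr /= big1 ?add0r.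
  by rewrite coefXn eqxx mul1r.
by move=> j _; rewrite coefXn (ltn_eqF (ltn_ord j)) mul0r.
Qed.

Lemma int01_0 : int01 (0 : {poly R}) = 0.
Proof. by rewrite /int01 size_poly0 big_ord0. Qed.

Lemma int01_cubic (c0 c1 c2 c3 : R) :
  int01 (c0%:P * 'X^0 + (c1%:P * 'X^1 + (c2%:P * 'X^2 + (c3%:P * 'X^3 + 0)))) =
  c0 + c1 / 2%:R + c2 / 3%:R + c3 / 4%:R.
Proof.
rewrite (int01_lin (erefl _)) (int01_lin (erefl _)) (int01_lin (erefl _)).
rewrite (int01_lin (erefl _)) !int01_Xn int01_0 invr1; ring.
Qed.

End Basic.
Arguments int01_ge [R n p].
Arguments loc0 [R J f] k.
Arguments der0 [R J f] k.
Arguments int01_lin [R a p q r].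

Section Ip.
Variables (R : rcfType) (J : nat).

Lemma ipS_ext v (P Q : nat -> {poly R}) : (forall k, P k = Q k) -> ipS J v P = ipS J v Q.
Proof. by move=> H; case: v; rewrite /ipS /ipL /ipE; apply: eq_bigr => k _; rewrite H. Qed.

Lemma ipS_lin v a (P Q H : nat -> {poly R}) : (forall k, H k = a%:P * P k + Q k) ->
  ipS J v H = a * ipS J v P + ipS J v Q.
Proof.
move=> HH; case: v; rewrite /ipS /ipL /ipE mulr_sumr -big_split /=;
  apply: eq_bigr => k _; rewrite HH.
  by rewrite !hornerD !hornerCM; ring.
by rewrite (int01_lin (erefl _)); ring.
Qed.

Lemma ipS0 v (P : nat -> {poly R}) : (forall k, P k = 0) -> ipS J v P = 0.
Proof.
move=> H; case: v; rewrite /ipS /ipL /ipE big1 // => k _; rewrite H.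
  by rewrite !horner0; ring.
by rewrite int01_0 mulr0.
Qed.

End Ip.

Arguments ipS_lin [R J v a P Q H].
Lemma ipE_lin (R : rcfType) J a (P Q H : nat -> {poly R}) : (forall k, H k = a%:P * P k + Q k) ->
  ipE J H = a * ipE J P + ipE J Q.
Proof. exact: (@ipS_lin R J Exact). Qed.
Arguments ipE_lin [R J a P Q H].
Lemma ipE0 (R : rcfType) J (P : nat -> {poly R}) : (forall k, P k = 0) -> ipE J P = 0.
Proof. exact: (@ipS0 R J Exact). Qed.
Arguments loc_lin [R J a f g h].
Arguments der_lin [R J a f g h].

Section Forms.
Variables (R : rcfType) (J : nat) (v : variant) (dom : domain) (bc : bool -> bctype)
  (rh : bool -> R) (X1 X2 : nodal R J) (dt : R).
Implicit Types (ka ch : nodal R J).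

Local Notation n k := (nrm X1 X2 k).
Local Notation v1 k := (nu1 X1 X2 k).
Local Notation v2 k := (nu2 X1 X2 k).

Definition I1 (d1 d2 ch : nodal R J) k := loc X1 k * (loc d1 k * (dt^-1 * v1 k)%:P
   + loc d2 k * (dt^-1 * v2 k)%:P) * loc ch k * (n k)%:P.
Definition I2 (ka ch : nodal R J) k := loc X1 k * loc ka k * loc ch k * (n k)%:P.
Definition I3 (ka e1 e2 : nodal R J) k := loc X1 k * loc ka k *
   ((v1 k)%:P * loc e1 k + (v2 k)%:P * loc e2 k) * (n k)%:P.
Definition I4 (d1 d2 e1 e2 : nodal R J) k := loc X1 k *
   ((der d1 k * der e1 k + der d2 k * der e2 k) / n k)%:P.
Definition bsum (e1 e2 : nodal R J) := \sum_(p : bool)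
         ((if inbd dom bc B1 p then rh p * X1 (ep J p) * e2 (ep J p) else 0)
        + (if inbd dom bc B2 p then rh p * X1 (ep J p) * e1 (ep J p) else 0)).

Definition E1 (d1 d2 ka ch : nodal R J) := ipS J v (I1 d1 d2 ch) - ipS J v (I2 ka ch).
Definition E2 (d1 d2 ka e1 e2 : nodal R J) := ipS J v (I3 ka e1 e2) + ipE J (I4 d1 d2 e1 e2).
Definition Rhs (e1 e2 : nodal R J) := - bsum e1 e2 - ipE J (fun k => loc e1 k * (n k)%:P)
   - ipE J (I4 X1 X2 e1 e2).

Section Lin.
Variables (a : R) (f1 f2 f3 g1 g2 g3 h1 h2 h3 : nodal R J).
Hypotheses (H1 : forall i, h1 i = a * f1 i + g1 i) (H2 : forall i, h2 i = a * f2 i + g2 i)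
  (H3 : forall i, h3 i = a * f3 i + g3 i).

Lemma E1_linl (ch : nodal R J) : E1 h1 h2 h3 ch = a * E1 f1 f2 f3 ch + E1 g1 g2 g3 ch.
Proof.
rewrite /E1 (ipS_lin (a := a) (P := I1 f1 f2 ch) (Q := I1 g1 g2 ch)); last first.
  by move=> k; rewrite /I1 (loc_lin k H1) (loc_lin k H2); ring.
rewrite (ipS_lin (a := a) (H := I2 h3 ch) (P := I2 f3 ch) (Q := I2 g3 ch)); last first.
  by move=> k; rewrite /I2 (loc_lin k H3); ring.
ring.
Qed.

Lemma E1_linr (d1 d2 ka : nodal R J) : E1 d1 d2 ka h3 = a * E1 d1 d2 ka f3 + E1 d1 d2 ka g3.
Proof.
rewrite /E1 (ipS_lin (a := a) (P := I1 d1 d2 f3) (Q := I1 d1 d2 g3)); last first.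
  by move=> k; rewrite /I1 (loc_lin k H3); ring.
rewrite (ipS_lin (a := a) (H := I2 ka h3) (P := I2 ka f3) (Q := I2 ka g3)); last first.
  by move=> k; rewrite /I2 (loc_lin k H3); ring.
ring.
Qed.

Lemma I4_linl (e1 e2 : nodal R J) k : I4 h1 h2 e1 e2 k = a%:P * I4 f1 f2 e1 e2 k + I4 g1 g2 e1 e2 k.
Proof.
rewrite /I4 (der_lin k H1) (der_lin k H2).
have -> : ((a * der f1 k + der g1 k) * der e1 k + (a * der f2 k + der g2 k) * der e2 k) / n k
  = a * ((der f1 k * der e1 k + der f2 k * der e2 k) / n k)
    + (der g1 k * der e1 k + der g2 k * der e2 k) / n k by ring.
rewrite rmorphD rmorphM /=; ring.
Qed.

Lemma I4_linr (d1 d2 : nodal R J) k : I4 d1 d2 h1 h2 k = a%:P * I4 d1 d2 f1 f2 k + I4 d1 d2 g1 g2 k.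
Proof.
rewrite /I4 (der_lin k H1) (der_lin k H2).
have -> : (der d1 k * (a * der f1 k + der g1 k) + der d2 k * (a * der f2 k + der g2 k)) / n k
  = a * ((der d1 k * der f1 k + der d2 k * der f2 k) / n k)
    + (der d1 k * der g1 k + der d2 k * der g2 k) / n k by ring.
rewrite rmorphD rmorphM /=; ring.
Qed.

Lemma E2_linl (e1 e2 : nodal R J) : E2 h1 h2 h3 e1 e2 = a * E2 f1 f2 f3 e1 e2 + E2 g1 g2 g3 e1 e2.
Proof.
rewrite /E2 (ipS_lin (a := a) (P := I3 f3 e1 e2) (Q := I3 g3 e1 e2)); last first.
  by move=> k; rewrite /I3 (loc_lin k H3); ring.
rewrite (ipE_lin (a := a) (H := I4 h1 h2 e1 e2) (P := I4 f1 f2 e1 e2) (Q := I4 g1 g2 e1 e2)).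
  ring.
by move=> k; rewrite I4_linl.
Qed.

Lemma E2_linr (d1 d2 ka : nodal R J) : E2 d1 d2 ka h1 h2 = a * E2 d1 d2 ka f1 f2 + E2 d1 d2 ka g1 g2.
Proof.
rewrite /E2 (ipS_lin (a := a) (P := I3 ka f1 f2) (Q := I3 ka g1 g2)); last first.
  by move=> k; rewrite /I3 (loc_lin k H1) (loc_lin k H2); ring.
rewrite (ipE_lin (a := a) (H := I4 d1 d2 h1 h2) (P := I4 d1 d2 f1 f2) (Q := I4 d1 d2 g1 g2)).
  ring.
by move=> k; rewrite I4_linr.
Qed.

Lemma Rhs_lin : Rhs h1 h2 = a * Rhs f1 f2 + Rhs g1 g2.
Proof.
rewrite /Rhs.
rewrite (ipE_lin (a := a) (H := I4 X1 X2 h1 h2) (P := I4 X1 X2 f1 f2) (Q := I4 X1 X2 g1 g2)); last by move=> k; rewrite I4_linr.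
rewrite (ipE_lin (a := a) (H := fun k => loc h1 k * (n k)%:P) (P := fun k => loc f1 k * (n k)%:P) (Q := fun k => loc g1 k * (n k)%:P));
  last by move=> k; rewrite (loc_lin k H1); ring.
have -> : bsum h1 h2 = a * bsum f1 f2 + bsum g1 g2.
  rewrite /bsum mulr_sumr -big_split; apply: eq_bigr => p _ /=.
  by rewrite H1 H2; case: ifP; case: ifP => _ _; ring.
ring.
Qed.

End Lin.

Lemma E1_0 (d1 d2 ka ch : nodal R J) : (forall i, ch i = 0) -> E1 d1 d2 ka ch = 0.
Proof.
move=> H; rewrite /E1 !ipS0 ?subrr // => k; rewrite /I1 /I2 (loc0 k H); ring.
Qed.

Lemma E2_0 (d1 d2 ka e1 e2 : nodal R J) : (forall i, e1 i = 0) -> (forall i, e2 i = 0) ->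
  E2 d1 d2 ka e1 e2 = 0.
Proof.
move=> H1 H2; rewrite /E2 ipS0; last by move=> k; rewrite /I3 (loc0 k H1) (loc0 k H2); ring.
rewrite ipE0 ?addr0 // => k.
by rewrite /I4 (der0 k H1) (der0 k H2) !mulr0 addr0 mul0r mulr0.
Qed.

Lemma Rhs_0 (e1 e2 : nodal R J) : (forall i, e1 i = 0) -> (forall i, e2 i = 0) ->
  Rhs e1 e2 = 0.
Proof.
move=> H1 H2; rewrite /Rhs (@ipE0 _ _ (fun k => loc e1 k * (n k)%:P));
  last by move=> k; rewrite (loc0 k H1) mul0r.
rewrite (@ipE0 _ _ (I4 X1 X2 e1 e2)); last first.
  by move=> k; rewrite /I4 (der0 k H1) (der0 k H2) !mulr0 addr0 mul0r mulr0.
rewrite /bsum big1; first by ring.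
move=> p _; rewrite H1 H2 !mulr0.
by case: ifP; case: ifP => _ _; ring.
Qed.

Lemma scheme_iff (d1 d2 ka : nodal R J) : scheme v dom bc rh dt X1 X2 d1 d2 ka <->
  (forall ch, inW v dom bc ch -> E1 d1 d2 ka ch = 0) /\ (forall e1 e2, inVd dom bc e1 e2 -> E2 d1 d2 ka e1 e2 = Rhs e1 e2).
Proof.
have L1 : forall k, loc (fun i => X1 i + d1 i) k - loc X1 k = loc d1 k.
  by move=> k; rewrite (loc_lin (a := 1) (f := d1) (g := X1) k) => [|i]; [rewrite polyC1 mul1r addrK | ring].
have L2 : forall k, loc (fun i => X2 i + d2 i) k - loc X2 k = loc d2 k.
  by move=> k; rewrite (loc_lin (a := 1) (f := d2) (g := X2) k) => [|i]; [rewrite polyC1 mul1r addrK | ring].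
have Eq1 : forall ch, ipS J v (fun k => loc X1 k *
              ((loc (fun i => X1 i + d1 i) k - loc X1 k) * (dt^-1 * v1 k)%:P
             + (loc (fun i => X2 i + d2 i) k - loc X2 k) * (dt^-1 * v2 k)%:P)
              * loc ch k * (n k)%:P) = ipS J v (I1 d1 d2 ch).
  by move=> ch; apply: ipS_ext => k; rewrite L1 L2.
have Eq2 : forall e1 e2, ipE J (fun k => loc X1 k *
              ((der (fun i => X1 i + d1 i) k * der e1 k + der (fun i => X2 i + d2 i) k * der e2 k)
                 / n k)%:P) = ipE J (I4 X1 X2 e1 e2) + ipE J (I4 d1 d2 e1 e2).
  move=> e1 e2; rewrite -[ipE J (I4 X1 X2 e1 e2)]mul1r; apply: ipE_lin => k.
  rewrite mul1r /I4 (der_lin (a := 1) (f := X1) (g := d1) (h := fun i => X1 i + d1 i) k) => [|i]; last by ring.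
  rewrite (der_lin (a := 1) (f := X2) (g := d2) (h := fun i => X2 i + d2 i) k) => [|i]; last by ring.
  have -> : ((1 * der X1 k + der d1 k) * der e1 k + (1 * der X2 k + der d2 k) * der e2 k) / n k
    = (der X1 k * der e1 k + der X2 k * der e2 k) / n k
      + (der d1 k * der e1 k + der d2 k * der e2 k) / n k by ring.
  rewrite rmorphD /=; ring.
split.
  move=> [S1 S2]; split.
    by move=> ch Hch; rewrite /E1 -Eq1 S1 // subrr.
  move=> e1 e2 He; have := S2 e1 e2 He; rewrite Eq2 /E2 /Rhs -/(bsum e1 e2) => <-.
  rewrite /I3; ring.
move=> [S1 S2]; split.
  by move=> ch Hch; rewrite Eq1; apply/eqP; rewrite -subr_eq0; apply/eqP; exact: S1.
move=> e1 e2 He; rewrite Eq2 -/(bsum e1 e2).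
have := S2 e1 e2 He; rewrite /E2 /Rhs /I3.
set A := ipS J v _; set B := ipE J (I4 d1 d2 e1 e2) => H.
have -> : A = (A + B) - B by ring.
rewrite H; ring.
Qed.

End Forms.

Section Calc.
Variable R : rcfType.

Lemma int_cube (a b c e n : R) :
  int01 ((a%:P + b *: 'X) * (c%:P + e *: 'X) * (c%:P + e *: 'X) * n%:P) =
  n * (a * c ^+ 2 + (b * c ^+ 2 + 2%:R * a * c * e) / 2%:R
       + (a * e ^+ 2 + 2%:R * b * c * e) / 3%:R + b * e ^+ 2 / 4%:R).
Proof.
have -> : (a%:P + b *: 'X) * (c%:P + e *: 'X) * (c%:P + e *: 'X) * n%:P =
  (n * (a * c ^+ 2))%:P * 'X^0 + ((n * (b * c ^+ 2 + 2%:R * a * c * e))%:P * 'X^1 +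
  ((n * (a * e ^+ 2 + 2%:R * b * c * e))%:P * 'X^2 + ((n * (b * e ^+ 2))%:P * 'X^3 + 0))).
  rewrite -!mul_polyC !(rmorphD, rmorphM, rmorphXn, rmorph_nat) /= expr0 expr1; ring.
rewrite int01_cubic; ring.
Qed.

Lemma int_lin1 (a b z : R) :
  int01 ((a%:P + b *: 'X) * z%:P) = z * (a + b / 2%:R).
Proof.
have -> : (a%:P + b *: 'X) * z%:P =
  (z * a)%:P * 'X^0 + ((z * b)%:P * 'X^1 + (0%:P * 'X^2 + (0%:P * 'X^3 + 0))).
  rewrite -!mul_polyC !(rmorphD, rmorphM) /= expr0 expr1 !rmorph0; ring.
rewrite int01_cubic; ring.
Qed.

Lemma hor_lin (a b x : R) : (a%:P + b *: 'X).[x] = a + b * x.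
Proof. by rewrite hornerD hornerC hornerZ hornerX. Qed.

Lemma cube_nonneg (a a' c e : R) : 0 <= a -> 0 <= a' -> 0 < a + a' ->
  0 <= a * c ^+ 2 + ((a' - a) * c ^+ 2 + 2%:R * a * c * e) / 2%:R
       + (a * e ^+ 2 + 2%:R * (a' - a) * c * e) / 3%:R + (a' - a) * e ^+ 2 / 4%:R /\
  (a * c ^+ 2 + ((a' - a) * c ^+ 2 + 2%:R * a * c * e) / 2%:R
       + (a * e ^+ 2 + 2%:R * (a' - a) * c * e) / 3%:R + (a' - a) * e ^+ 2 / 4%:R = 0 ->
   c = 0 /\ e = 0).
Proof.
move=> Ha Ha' Hs.
set P1 := 2%:R * c ^+ 2 + (2%:R * c + e) ^+ 2.
set P2 := 2%:R * c ^+ 2 + (3%:R * e + 4%:R * c) ^+ 2.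
have HP1 : 0 <= P1 by rewrite /P1; apply: addr_ge0; [apply: mulr_ge0; [by rewrite ler0n | exact: sqr_ge0] | exact: sqr_ge0].
have HP2 : 0 <= P2 by rewrite /P2; apply: addr_ge0; [apply: mulr_ge0; [by rewrite ler0n | exact: sqr_ge0] | exact: sqr_ge0].
have -> : a * c ^+ 2 + ((a' - a) * c ^+ 2 + 2%:R * a * c * e) / 2%:R
       + (a * e ^+ 2 + 2%:R * (a' - a) * c * e) / 3%:R + (a' - a) * e ^+ 2 / 4%:R
     = (a * P1) / 12%:R + (a' * P2) / 36%:R.
  rewrite /P1 /P2; field; rewrite ?pnatr_eq0 //.
have H1 : 0 <= a * P1 / 12%:R by apply: divr_ge0; [exact: mulr_ge0 | rewrite ler0n].
have H2 : 0 <= a' * P2 / 36%:R by apply: divr_ge0; [exact: mulr_ge0 | rewrite ler0n].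
split; first exact: addr_ge0.
move=> /eqP; rewrite paddr_eq0 // => /andP [/eqP E1 /eqP E2].
have : a * P1 = 0 by move/eqP: E1; rewrite mulf_eq0 invr_eq0 pnatr_eq0 orbF => /eqP.
have : a' * P2 = 0 by move/eqP: E2; rewrite mulf_eq0 invr_eq0 pnatr_eq0 orbF => /eqP.
move=> /eqP; rewrite mulf_eq0 => /orP [/eqP Ha'0 | /eqP P20 _].
  have Ha0 : a != 0 by apply/eqP => Ha0; move: Hs; rewrite Ha0 Ha'0 addr0 ltxx.
  move=> /eqP; rewrite mulf_eq0 (negbTE Ha0) /= => /eqP; rewrite /P1 => /eqP.
  rewrite paddr_eq0; last 2 first.
  - by apply: mulr_ge0; [by rewrite ler0n | exact: sqr_ge0].
  - exact: sqr_ge0.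
  rewrite mulf_eq0 pnatr_eq0 /= !sqrf_eq0.
  by move=> /andP [/eqP c0]; rewrite c0 mulr0 add0r => /eqP.
move: P20; rewrite /P2 => /eqP.
rewrite paddr_eq0; last 2 first.
- by apply: mulr_ge0; [by rewrite ler0n | exact: sqr_ge0].
- exact: sqr_ge0.
rewrite mulf_eq0 pnatr_eq0 /= !sqrf_eq0.
move=> /andP [/eqP c0]; rewrite c0 mulr0 addr0 mulf_eq0 pnatr_eq0 /=.
by move=> /eqP.
Qed.

End Calc.

Section Coer.
Variables (R : rcfType) (J : nat) (v : variant) (dom : domain) (bc : bool -> bctype)
  (X1 X2 : nodal R J) (dt : R).
Hypotheses (HJ : (3 <= J)%N) (HX : inVd0 dom bc X1 X2) (HA : assumA dom bc X1 X2)
  (HC : assumC v dom bc X1 X2) (Hdt : 0 < dt).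

Lemma inord0E : inord 0 = ord0 :> 'I_J.+1.
Proof. by apply: val_inj; rewrite /= inordK. Qed.

Lemma inordJE : inord J = ord_max :> 'I_J.+1.
Proof. by apply: val_inj; rewrite /= inordK. Qed.

Lemma nd_val (f : nodal R J) (i : 'I_J.+1) : nd f i = f i.
Proof. by rewrite /nd inord_val. Qed.

Lemma Jpos : 0 < J%:R :> R.
Proof. by rewrite ltr0n; case: J HJ. Qed.

Lemma Xnodes k : (k < J)%N ->
  [/\ 0 < nd X1 k \/ (k = 0%N /\ inbd dom bc B0 false),
      0 < nd X1 k.+1 \/ (k.+1 = J /\ inbd dom bc B0 true) &
      0 < nd X1 k + nd X1 k.+1].
Proof.
move=> Hk; have HA2 := HA.2 k _ Hk.
have ne01 : (0 : R) <> 1 by move=> /eqP; rewrite eq_sym oner_eq0.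
split.
- case E: ((k == 0)%N && inbd dom bc B0 false).
    by move/andP: E => [/eqP -> ->]; right.
  left; have := HA2 0; rewrite /loc hor_lin mulr0 addr0; apply.
    by rewrite lexx ler01.
  move=> [[k0 [_ hb]] | [_ [h _]]] //.
  by move: E; rewrite k0 hb.
- case E: ((k.+1 == J)%N && inbd dom bc B0 true).
    by move/andP: E => [/eqP -> ->]; right.
  left; have := HA2 1; rewrite /loc hor_lin mulr1 addrC subrK; apply.
    by rewrite ler01 lexx.
  move=> [[_ [h _]] | [kJ [_ hb]]]; first by apply: ne01.
  by move: E; rewrite kJ hb prednK ?eqxx //; case: J HJ.
- have := HA2 2%:R^-1; rewrite /loc hor_lin => H.
  have H2 : 0 < nd X1 k + (nd X1 k.+1 - nd X1 k) * 2%:R^-1.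
    apply: H.
      by rewrite invr_ge0 ler0n /= invf_le1 ?ler1n ?ltr0n.
    have h1 : (2%:R^-1 : R) != 0 by rewrite invr_eq0 pnatr_eq0.
    have h2 : (2%:R^-1 : R) != 1 by rewrite invr_eq1 pnatr_eq1.
    by move=> [[_ [h _]] | [_ [h _]]]; [move: h1 | move: h2]; rewrite h eqxx.
  have -> : nd X1 k + nd X1 k.+1 = 2%:R * (nd X1 k + (nd X1 k.+1 - nd X1 k) * 2%:R^-1).
    by field.
  by rewrite mulr_gt0 ?ltr0n.
Qed.

Lemma X0 p : inbd dom bc B0 p -> X1 (ep J p) = 0.
Proof. by case: HX => _ [_ H] /H. Qed.

Lemma Xnn k : (k < J)%N -> 0 <= nd X1 k /\ 0 <= nd X1 k.+1.
Proof.
move=> Hk; have [H1 H2 _] := Xnodes k Hk; split.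
  case: H1 => [/ltW // | [-> hb]]; by rewrite /nd inord0E -(X0 _ hb).
case: H2 => [/ltW // | [-> hb]]; by rewrite /nd inordJE -(X0 _ hb).
Qed.

Lemma nodes_zero (f : nodal R J) : (forall j, (j <= J)%N -> nd f j = 0) -> forall i, f i = 0.
Proof. by move=> H i; rewrite -nd_val; apply: H; rewrite -ltnS ltn_ord. Qed.

Lemma npos k : (k < J)%N -> 0 < nrm X1 X2 k.
Proof. exact: HA.1. Qed.

Lemma hor01 (f : nodal R J) k : (loc f k).[0] = nd f k /\ (loc f k).[1] = nd f k.+1.
Proof. by rewrite /loc !hor_lin mulr0 addr0 mulr1 addrC subrK. Qed.

Lemma Kprop (ka : nodal R J) : inW v dom bc ka ->
  0 <= ipS J v (I2 X1 X2 ka ka) /\ (ipS J v (I2 X1 X2 ka ka) = 0 -> forall i, ka i = 0).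
Proof.
move=> Hka; have Jinv : 0 < (J%:R : R)^-1 by rewrite invr_gt0 Jpos.
case: v Hka => Hka; rewrite /ipS.
-
  have Ek : forall k : 'I_J, (J%:R)^-1 / 2%:R * ((I2 X1 X2 ka ka k).[1] + (I2 X1 X2 ka ka k).[0])
      = (J%:R)^-1 / 2%:R * (nd X1 k.+1 * nd ka k.+1 ^+ 2 * nrm X1 X2 k
                            + nd X1 k * nd ka k ^+ 2 * nrm X1 X2 k).
    move=> k; rewrite /I2 !hornerM !hornerC.
    have [a0 a1] := hor01 X1 k; have [c0 c1] := hor01 ka k.
    by rewrite a0 a1 c0 c1 expr2 !mulrA.
  have Tnn : forall k : 'I_J, 0 <= nd X1 k.+1 * nd ka k.+1 ^+ 2 * nrm X1 X2 k /\
                              0 <= nd X1 k * nd ka k ^+ 2 * nrm X1 X2 k.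
    move=> k; have [h0 h1] := Xnn k (ltn_ord k); have hn := ltW (npos k (ltn_ord k)).
    by split; apply: mulr_ge0 => //; apply: mulr_ge0 => //; exact: sqr_ge0.
  have Fnn : forall k : 'I_J, true -> 0 <= (J%:R)^-1 / 2%:R * ((I2 X1 X2 ka ka k).[1] + (I2 X1 X2 ka ka k).[0]).
    move=> k _; rewrite Ek; have [t1 t2] := Tnn k.
    by apply: mulr_ge0; [apply: divr_ge0; [exact: ltW | by rewrite ler0n] | exact: addr_ge0].
  split; first by apply: sumr_ge0.
  move=> S0.
  have Z : forall k : 'I_J, nd X1 k.+1 * nd ka k.+1 ^+ 2 = 0 /\ nd X1 k * nd ka k ^+ 2 = 0.
    move=> k; have := psumr_eq0P Fnn S0 (i := k) isT; rewrite Ek.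
    have [t1 t2] := Tnn k; have hn := npos k (ltn_ord k).
    move/eqP; rewrite mulf_eq0 mulf_eq0 invr_eq0 (gt_eqF Jpos) invr_eq0 pnatr_eq0 /=.
    rewrite paddr_eq0 // => /andP [/eqP e1 /eqP e2].
    split; [move/eqP: e1 | move/eqP: e2]; by rewrite mulf_eq0 (gt_eqF hn) orbF => /eqP.
  have K0 : forall p, inbd dom bc B0 p -> ka (ep J p) = 0 by case: Hka => _.
  apply: nodes_zero => j Hj.
  case: (ltnP j J) => HjJ.
  + have [h1 _ _] := Xnodes j HjJ; have [_ z] := Z (Ordinal HjJ); move: z => /= /eqP.
    case: h1 => [hp | [j0 hb]].
      by rewrite mulf_eq0 (gt_eqF hp) /= sqrf_eq0 => /eqP.
    by move=> _; rewrite j0 /nd inord0E -(K0 _ hb).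
  + have Jj : j = J by apply/eqP; rewrite eqn_leq Hj HjJ.
    have HkJ : (J.-1 < J)%N by rewrite prednK ?leqnn //; case: J HJ.
    have [_ h2 _] := Xnodes J.-1 HkJ; have [z _] := Z (Ordinal HkJ); move: z => /= /eqP.
    rewrite prednK ?Jj; last by case: J HJ.
    case: h2 => [hp | [_ hb]].
      by rewrite prednK in hp; [rewrite mulf_eq0 (gt_eqF hp) /= sqrf_eq0 => /eqP | case: J HJ].
    by move=> _; rewrite /nd inordJE -(K0 _ hb).
-
  have Ek : forall k : 'I_J, (J%:R)^-1 * int01 (I2 X1 X2 ka ka k) =
     (J%:R)^-1 * (nrm X1 X2 k * (nd X1 k * nd ka k ^+ 2 + ((nd X1 k.+1 - nd X1 k) * nd ka k ^+ 2
        + 2%:R * nd X1 k * nd ka k * (nd ka k.+1 - nd ka k)) / 2%:R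
       + (nd X1 k * (nd ka k.+1 - nd ka k) ^+ 2 + 2%:R * (nd X1 k.+1 - nd X1 k) * nd ka k
            * (nd ka k.+1 - nd ka k)) / 3%:R
       + (nd X1 k.+1 - nd X1 k) * (nd ka k.+1 - nd ka k) ^+ 2 / 4%:R)).
    by move=> k; rewrite /I2 /loc int_cube.
  have Fnn : forall k : 'I_J, true -> 0 <= (J%:R)^-1 * int01 (I2 X1 X2 ka ka k).
    move=> k _; rewrite Ek; have [h0 h1] := Xnn k (ltn_ord k); have [_ _ h3] := Xnodes k (ltn_ord k).
    have [c1 _] := cube_nonneg _ _ _ (nd ka k) (nd ka k.+1 - nd ka k) h0 h1 h3.
    have hn := ltW (npos k (ltn_ord k)).
    by apply: mulr_ge0; [exact: ltW | exact: mulr_ge0].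
  split; first by apply: sumr_ge0.
  move=> S0.
  have Z : forall k : 'I_J, nd ka k = 0 /\ nd ka k.+1 = 0.
    move=> k; have := psumr_eq0P Fnn S0 (i := k) isT; rewrite Ek.
    have [h0 h1] := Xnn k (ltn_ord k); have [_ _ h3] := Xnodes k (ltn_ord k).
    have [_ c2] := cube_nonneg _ _ _ (nd ka k) (nd ka k.+1 - nd ka k) h0 h1 h3.
    have hn := npos k (ltn_ord k).
    move/eqP; rewrite mulf_eq0 (gt_eqF Jinv) mulf_eq0 (gt_eqF hn) /= => /eqP /c2 [-> h].
    by split => //; move/eqP: h; rewrite subr_eq0 => /eqP.
  apply: nodes_zero => j Hj.
  case: (ltnP j J) => HjJ; first by have [] := Z (Ordinal HjJ).
  have Jj : j = J by apply/eqP; rewrite eqn_leq Hj HjJ.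
  have HkJ : (J.-1 < J)%N by rewrite prednK ?leqnn //; case: J HJ.
  have [_ z] := Z (Ordinal HkJ); move: z => /=; rewrite prednK ?Jj //; by case: J HJ.
Qed.

Lemma Dprop (d1 d2 : nodal R J) :
  0 <= ipE J (I4 X1 X2 d1 d2 d1 d2) /\
  (ipE J (I4 X1 X2 d1 d2 d1 d2) = 0 -> forall k, (k < J)%N -> der d1 k = 0 /\ der d2 k = 0).
Proof.
have Jinv : 0 < (J%:R : R)^-1 by rewrite invr_gt0 Jpos.
rewrite /ipE.
have Ek : forall k : 'I_J, (J%:R)^-1 * int01 (I4 X1 X2 d1 d2 d1 d2 k) =
   (J%:R)^-1 * ((der d1 k * der d1 k + der d2 k * der d2 k) / nrm X1 X2 k
     * ((nd X1 k + nd X1 k.+1) / 2%:R)).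
  move=> k; rewrite /I4 /loc int_lin1; congr (_ * (_ * _)); by field.
have Fnn : forall k : 'I_J, true -> 0 <= (J%:R)^-1 * int01 (I4 X1 X2 d1 d2 d1 d2 k).
  move=> k _; rewrite Ek; have [_ _ h3] := Xnodes k (ltn_ord k); have hn := npos k (ltn_ord k).
  apply: mulr_ge0; first exact: ltW.
  apply: mulr_ge0; last by apply: divr_ge0; [exact: ltW | rewrite ler0n].
  apply: divr_ge0; last exact: ltW.
  by apply: addr_ge0; rewrite -expr2 sqr_ge0.
split; first by apply: sumr_ge0.
move=> S0 k Hk; have := psumr_eq0P Fnn S0 (i := Ordinal Hk) isT; rewrite Ek /=.
have [_ _ h3] := Xnodes k Hk; have hn := npos k Hk.
move/eqP; rewrite mulf_eq0 (gt_eqF Jinv) /= mulf_eq0 mulf_eq0 invr_eq0 (gt_eqF hn) orbF.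
rewrite mulf_eq0 invr_eq0 pnatr_eq0 orbF (gt_eqF h3) orbF -!expr2.
rewrite paddr_eq0 ?sqr_ge0 // !sqrf_eq0 => /andP [/eqP -> /eqP ->]; done.
Qed.

Lemma cst (f : nodal R J) : (forall k, (k < J)%N -> der f k = 0) -> forall i, f i = f ord0.
Proof.
move=> H.
have Hj : forall j, (j <= J)%N -> nd f j = nd f 0.
  elim=> [//|j IH] Hj.
  have hj : (j < J)%N by [].
  rewrite -(IH (ltnW Hj)); apply/eqP; rewrite -subr_eq0.
  have := H j hj; rewrite /der => /eqP; rewrite mulf_eq0 (gt_eqF Jpos) orbF; done.
move=> i; rewrite -nd_val Hj ?/nd ?inord0E //; by rewrite -ltnS ltn_ord.
Qed.

Lemma loc_const k (f : nodal R J) c : (forall i, f i = c) -> loc f k = c%:P.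
Proof. by move=> H; rewrite /loc /nd !H subrr scale0r addr0. Qed.

Lemma coer (d1 d2 ka : nodal R J) : inVd dom bc d1 d2 -> inW v dom bc ka ->
  (forall f1 f2 f3, inVd dom bc f1 f2 -> inW v dom bc f3 ->
     E1 v X1 X2 dt d1 d2 ka f3 + E2 v X1 X2 d1 d2 ka f1 f2 = 0) ->
  forall i, d1 i = 0 /\ d2 i = 0 /\ ka i = 0.
Proof.
move=> Hd Hka H.
pose Z : nodal R J := fun _ => 0.
have ZVd : inVd dom bc Z Z by do !split.
have ZW : inW v dom bc Z by case: v; do !split.
have H1 : E1 v X1 X2 dt d1 d2 ka ka = 0.
  by have := H Z Z ka ZVd Hka; rewrite (E2_0 _ _ _ _ _ _ _ _ (fun=> erefl) (fun=> erefl)) addr0.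
have H2 : E2 v X1 X2 d1 d2 ka d1 d2 = 0.
  by have := H d1 d2 Z Hd ZW; rewrite (E1_0 _ _ _ _ _ _ _ _ (fun=> erefl)) add0r.
set S := ipS J v (I3 X1 X2 ka d1 d2).
have ES : ipS J v (I1 X1 X2 dt d1 d2 ka) = dt^-1 * S.
  rewrite (ipS_lin (a := dt^-1) (P := I3 X1 X2 ka d1 d2) (Q := fun _ => 0)).
    by rewrite (@ipS0 _ _ v (fun _ => 0)) // addr0.
  by move=> k; rewrite /I1 /I3 !rmorphM /=; ring.
have [Knn K0] := Kprop ka Hka.
have [Dnn D0] := Dprop d1 d2.
move: H1 H2; rewrite /E1 /E2 ES -/S => H1 H2.
have EK : ipS J v (I2 X1 X2 ka ka) = dt^-1 * S by apply/eqP; rewrite eq_sym -subr_eq0 H1.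
have ED : ipE J (I4 X1 X2 d1 d2 d1 d2) = - S by apply/eqP; rewrite -addr_eq0 addrC H2.
have dti : 0 < dt^-1 by rewrite invr_gt0.
have S0 : S = 0.
  apply/eqP; rewrite eq_le; apply/andP; split.
    by rewrite -oppr_ge0 -ED.
  by rewrite -(pmulr_rge0 _ dti) -EK.
have ka0 : forall i, ka i = 0 by apply: K0; rewrite EK S0 mulr0.
have [de1 de2] : (forall k, (k < J)%N -> der d1 k = 0) /\ (forall k, (k < J)%N -> der d2 k = 0).
  have dd : forall k, (k < J)%N -> der d1 k = 0 /\ der d2 k = 0 by apply: D0; rewrite ED S0 oppr0.
  by split => k hk; have [] := dd k hk.
have c1E := cst d1 de1; have c2E := cst d2 de2.
set c1 := d1 ord0 in c1E; set c2 := d2 ord0 in c2E.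
have Orth : forall f3, inW v dom bc f3 -> c1 * (cvec v X1 X2 f3).1 + c2 * (cvec v X1 X2 f3).2 = 0.
  move=> f3 Hf3; have := H Z Z f3 ZVd Hf3.
  rewrite (E2_0 _ _ _ _ _ _ _ _ (fun=> erefl) (fun=> erefl)) addr0 /E1.
  rewrite (@ipS0 _ _ _ (I2 X1 X2 ka f3)); last first.
    by move=> k; rewrite /I2 (loc0 k ka0) mulr0 !mul0r.
  rewrite subr0 (ipS_lin (a := dt^-1 * c1)
     (P := fun k => loc X1 k * (nu1 X1 X2 k)%:P * loc f3 k * (nrm X1 X2 k)%:P)
     (Q := fun k => (dt^-1 * c2)%:P * (loc X1 k * (nu2 X1 X2 k)%:P * loc f3 k * (nrm X1 X2 k)%:P)
               + 0)).
    rewrite (ipS_lin (a := dt^-1 * c2)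
     (H := fun k => (dt^-1 * c2)%:P * (loc X1 k * (nu2 X1 X2 k)%:P * loc f3 k * (nrm X1 X2 k)%:P)
               + 0)
     (P := fun k => loc X1 k * (nu2 X1 X2 k)%:P * loc f3 k * (nrm X1 X2 k)%:P)
     (Q := fun _ => 0)) // (@ipS0 _ _ v (fun _ => 0)) // addr0 /cvec /= => E.
    have : dt^-1 * (c1 * (cvec v X1 X2 f3).1 + c2 * (cvec v X1 X2 f3).2) = 0.
      by rewrite /cvec /= -E; ring.
    by move/eqP; rewrite mulf_eq0 (gt_eqF dti) /= => /eqP.
  move=> k; rewrite /I1 (loc_const k _ c1E) (loc_const k _ c2E) !rmorphM /=; ring.
have [m [g [chis [Hch [Ec1 Ec2]]]]] := HC c1 c2.
have : c1 ^+ 2 + c2 ^+ 2 = 0.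
  rewrite expr2 {2}Ec1 expr2 {2}Ec2 !mulr_sumr -big_split big1 //= => i _.
  have := Orth (chis i) (Hch i); move=> E.
  transitivity (g i * (c1 * (cvec v X1 X2 (chis i)).1 + c2 * (cvec v X1 X2 (chis i)).2)).
    by rewrite /cvec /=; ring.
  by rewrite E mulr0.
move/eqP; rewrite paddr_eq0 ?sqr_ge0 // !sqrf_eq0 => /andP [/eqP z1 /eqP z2].
by move=> i; rewrite c1E c2E z1 z2 ka0.
Qed.

End Coer.

Section Mem.
Variables (R : rcfType) (J : nat) (v : variant) (dom : domain) (bc : bool -> bctype).

Definition per (f : nodal R J) : R := if dom is Periodic then f ord0 - f ord_max else 0.
Definition cnd (b : bool) (x : R) := if b then x else 0.
Definition c1b p := [|| inbd dom bc B0 p, inbd dom bc B1 p | inbd dom bc BD p].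
Definition c2b p := inbd dom bc B2 p || inbd dom bc BD p.
Definition c3b p := if v is Lumped then inbd dom bc B0 p else false.
Definition gl (f1 f2 f3 : nodal R J) : seq R :=
  [:: per f1; per f2; per f3; cnd (c1b false) (f1 (ep J false)); cnd (c1b true) (f1 (ep J true));
      cnd (c2b false) (f2 (ep J false)); cnd (c2b true) (f2 (ep J true));
      cnd (c3b false) (f3 (ep J false)); cnd (c3b true) (f3 (ep J true))].

Lemma per_iff (f : nodal R J) : inV dom f <-> per f = 0.
Proof.
rewrite /inV /per; case: dom; split => //.
- by move=> H; rewrite H // subrr.
- by move=> /eqP; rewrite subr_eq0 => /eqP.
Qed.

Lemma bd_iff (f1 f2 : nodal R J) :
  (forall p, inbd dom bc B0 p -> f1 (ep J p) = 0) /\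
  ((forall p, inbd dom bc B1 p -> f1 (ep J p) = 0) /\
   (forall p, inbd dom bc B2 p -> f2 (ep J p) = 0) /\
   (forall p, inbd dom bc BD p -> f1 (ep J p) = 0 /\ f2 (ep J p) = 0)) <->
  (forall p, cnd (c1b p) (f1 (ep J p)) = 0 /\ cnd (c2b p) (f2 (ep J p)) = 0).
Proof.
split.
  move=> [h0 [h1 [h2 hD]]] p; rewrite /cnd /c1b /c2b; split.
    case: ifP => // /orP [h|/orP [h|h]]; [exact: h0 | exact: h1 | exact: (hD p h).1].
  case: ifP => // /orP [h|h]; [exact: h2 | exact: (hD p h).2].
move=> H; split; [|split; [|split]] => p h; have [a b] := H p; move: a b;
  rewrite /cnd /c1b /c2b h ?orbT //=.
Qed.

Lemma w_iff (f : nodal R J) : inW v dom bc f <->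
  per f = 0 /\ forall p, cnd (c3b p) (f (ep J p)) = 0.
Proof.
rewrite /inW /c3b /cnd; case: v; last first.
  by rewrite per_iff; split => [-> //|[]].
rewrite /inWd0 per_iff; split => [[a b]|[a b]]; split => // p.
  by case: ifP => // /b.
by move=> h; have := b p; rewrite h.
Qed.

Definition Umem (f1 f2 f3 : nodal R J) := inVd dom bc f1 f2 /\ inW v dom bc f3.

Lemma mem_iff (f1 f2 f3 : nodal R J) :
  Umem f1 f2 f3 <-> forall i : 'I_9, nth 0 (gl f1 f2 f3) i = 0.
Proof.
rewrite /Umem /inVd /inVd0 w_iff !per_iff.
split.
  move=> [[[a1 [a2 a3]] a4] [a5 a6]].
  have b := proj1 (bd_iff f1 f2) (conj a3 a4).
  have [c1 c2] := b false; have [c3 c4] := b true.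
  have d1 := a6 false; have d2 := a6 true.
  by case=> [[|[|[|[|[|[|[|[|[|i]]]]]]]]] Hi] //=.
move=> H.
have h k (Hk : (k < 9)%N) := H (Ordinal Hk).
have e0 := h 0%N isT; have e1 := h 1%N isT; have e2 := h 2%N isT; have e3 := h 3%N isT.
have e4 := h 4%N isT; have e5 := h 5%N isT; have e6 := h 6%N isT; have e7 := h 7%N isT.
have e8 := h 8%N isT; simpl in e0, e1, e2, e3, e4, e5, e6, e7, e8.
have := proj2 (bd_iff f1 f2); move=> B.
have Hp : forall p, cnd (c1b p) (f1 (ep J p)) = 0 /\ cnd (c2b p) (f2 (ep J p)) = 0 by case.
have [B1 [B2 [B3 B4]]] := B Hp.
do !split => //.
by case.
Qed.

End Mem.

Lemma gl_lin (R : rcfType) (J : nat) (v : variant) (dom : domain) (bc : bool -> bctype)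
  (a : R) (f1 f2 f3 g1 g2 g3 h1 h2 h3 : nodal R J) :
  (forall i, h1 i = a * f1 i + g1 i) -> (forall i, h2 i = a * f2 i + g2 i) ->
  (forall i, h3 i = a * f3 i + g3 i) ->
  forall i, nth 0 (gl v dom bc h1 h2 h3) i =
     a * nth 0 (gl v dom bc f1 f2 f3) i + nth 0 (gl v dom bc g1 g2 g3) i.
Proof.
move=> H1 H2 H3.
have P : forall f g h : nodal R J, (forall i, h i = a * f i + g i) ->
    per dom h = a * per dom f + per dom g.
  by move=> f g h H; rewrite /per; case: dom; rewrite ?H; ring.
have C : forall b (x y : R), cnd R b (a * x + y) = a * cnd R b x + cnd R b y.
  by move=> b x y; rewrite /cnd; case: b; ring.
case=> [|[|[|[|[|[|[|[|[|i]]]]]]]]] /=; rewrite ?(P _ _ _ H1) ?(P _ _ _ H2) ?(P _ _ _ H3)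
  ?H1 ?H2 ?H3 ?C ?nth_nil //; ring.
Qed.

Section Wrap.
Variables (R : rcfType) (J : nat).
Local Notation N := (J.+1 + (J.+1 + J.+1))%N.

Definition c1 (u : 'rV[R]_N) : nodal R J := fun i => lsubmx u 0 i.
Definition c2 (u : 'rV[R]_N) : nodal R J := fun i => lsubmx (rsubmx u) 0 i.
Definition c3 (u : 'rV[R]_N) : nodal R J := fun i => rsubmx (rsubmx u) 0 i.
Definition mk (f1 f2 f3 : nodal R J) : 'rV[R]_N :=
  row_mx (\row_i f1 i) (row_mx (\row_i f2 i) (\row_i f3 i)).

Lemma c1_lin a x y i : c1 (a *: x + y) i = a * c1 x i + c1 y i.
Proof. by rewrite /c1 linearD linearZ /= !mxE. Qed.
Lemma c2_lin a x y i : c2 (a *: x + y) i = a * c2 x i + c2 y i.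
Proof. by rewrite /c2 !linearD !linearZ /= !mxE. Qed.
Lemma c3_lin a x y i : c3 (a *: x + y) i = a * c3 x i + c3 y i.
Proof. by rewrite /c3 !linearD !linearZ /= !mxE. Qed.

Lemma c1_mk f1 f2 f3 : c1 (mk f1 f2 f3) = f1.
Proof. by apply: functional_extensionality => i; rewrite /c1 /mk row_mxKl mxE. Qed.
Lemma c2_mk f1 f2 f3 : c2 (mk f1 f2 f3) = f2.
Proof. by apply: functional_extensionality => i; rewrite /c2 /mk row_mxKr row_mxKl mxE. Qed.
Lemma c3_mk f1 f2 f3 : c3 (mk f1 f2 f3) = f3.
Proof. by apply: functional_extensionality => i; rewrite /c3 /mk row_mxKr row_mxKr mxE. Qed.

Lemma mk_c u : mk (c1 u) (c2 u) (c3 u) = u.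
Proof.
rewrite /mk -[RHS]hsubmxK; congr row_mx; first by apply/rowP=> i; rewrite mxE.
by rewrite -[RHS]hsubmxK; congr row_mx; apply/rowP => i; rewrite mxE.
Qed.

Lemma mk0 f1 f2 f3 : (forall i, f1 i = 0) -> (forall i, f2 i = 0) -> (forall i, f3 i = 0) ->
  mk f1 f2 f3 = 0.
Proof.
move=> H1 H2 H3; rewrite /mk.
have E : forall f : nodal R J, (forall i, f i = 0) -> \row_i f i = 0.
  by move=> f H; apply/rowP => i; rewrite !mxE H.
by rewrite (E _ H1) (E _ H2) (E _ H3) !row_mx0.
Qed.

End Wrap.
Arguments c1 {R J} u _.
Arguments c2 {R J} u _.
Arguments c3 {R J} u _.
Arguments mk_c {R J} u.
Arguments mk0 {R J}.
Arguments gl_lin [R J] v dom bc [a f1 f2 f3 g1 g2 g3 h1 h2 h3].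

Unset Implicit Arguments.

Theorem lemma4p3 (R : rcfType) (J : nat) (HJ : (3 <= J)%N)
  (dom : domain) (bc : bool -> bctype) (rh : bool -> R)
  (Hrh : forall p, `|rh p| <= 1) (v : variant)
  (X1 X2 : nodal R J)
  (HX : inVd0 dom bc X1 X2) (HA : assumA dom bc X1 X2)
  (HC : assumC v dom bc X1 X2) (dt : R) (Hdt : 0 < dt) :
  (exists dX1 dX2 kap : nodal R J,
     inVd dom bc dX1 dX2 /\ inW v dom bc kap /\
     scheme v dom bc rh dt X1 X2 dX1 dX2 kap) /\
  (forall dX1 dX2 kap dY1 dY2 lam : nodal R J,
     inVd dom bc dX1 dX2 -> inW v dom bc kap ->
     scheme v dom bc rh dt X1 X2 dX1 dX2 kap ->
     inVd dom bc dY1 dY2 -> inW v dom bc lam ->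
     scheme v dom bc rh dt X1 X2 dY1 dY2 lam ->
     dX1 = dY1 /\ dX2 = dY2 /\ kap = lam).
Proof.
pose Z : nodal R J := fun _ => 0.
have ZVd : inVd dom bc Z Z by do !split.
split; last first.
  move=> dX1 dX2 kap dY1 dY2 lam HdX Hkap Hs1 HdY Hlam Hs2.
  move/scheme_iff: Hs1 => [S1 S2]; move/scheme_iff: Hs2 => [T1 T2].
  pose D1 : nodal R J := fun i => -1 * dY1 i + dX1 i.
  pose D2 : nodal R J := fun i => -1 * dY2 i + dX2 i.
  pose D3 : nodal R J := fun i => -1 * lam i + kap i.
  have HD : Umem v dom bc D1 D2 D3.
    apply/mem_iff => i.
    rewrite (@gl_lin R J v dom bc (-1) dY1 dY2 lam dX1 dX2 kap D1 D2 D3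
      (fun=> erefl) (fun=> erefl) (fun=> erefl)).
    rewrite (proj1 (mem_iff _ _ _ _ _ _) (conj HdY Hlam) i).
    by rewrite (proj1 (mem_iff _ _ _ _ _ _) (conj HdX Hkap) i) mulr0 addr0.
  have Hc := coer dt HJ HX HA HC Hdt D3 HD.1 HD.2.
  have Hc' : forall i, D1 i = 0 /\ D2 i = 0 /\ D3 i = 0.
    apply: Hc => f1 f2 f3 Hf Hf3.
    rewrite (E1_linl v X1 X2 dt _ _ _ _ _ _ _ _ _ _ (fun=> erefl) (fun=> erefl) (fun=> erefl)).
    rewrite (E2_linl v X1 X2 _ _ _ _ _ _ _ _ _ _ (fun=> erefl) (fun=> erefl) (fun=> erefl)).
    rewrite (T1 f3 Hf3) (S1 f3 Hf3) (S2 f1 f2 Hf) (T2 f1 f2 Hf); ring.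
  have eq : forall x y : R, -1 * y + x = 0 -> x = y.
    by move=> x y H; apply/eqP; rewrite -subr_eq0; apply/eqP; rewrite -H; ring.
  split; [|split]; apply: functional_extensionality => i; have [a [b c]] := Hc' i; exact: eq.
set N := (J.+1 + (J.+1 + J.+1))%N.
pose Bv (u w : 'rV[R]_N) := E1 v X1 X2 dt (c1 u) (c2 u) (c3 u) (c3 w)
   + E2 v X1 X2 (c1 u) (c2 u) (c3 u) (c1 w) (c2 w).
pose Lv (w : 'rV[R]_N) := Rhs dom bc rh X1 X2 (c1 w) (c2 w).
pose Gv (u : 'rV[R]_N) : 'rV[R]_9 := \row_(i < 9) nth 0 (gl v dom bc (c1 u) (c2 u) (c3 u)) i.
have GvE : forall u, Gv u = 0 <-> Umem v dom bc (c1 u) (c2 u) (c3 u).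
  move=> u; rewrite mem_iff; split => [H i | H].
    by move/rowP: H => /(_ i); rewrite !mxE.
  by apply/rowP => i; rewrite !mxE H.
have Gmk : forall f1 f2 f3, Umem v dom bc f1 f2 f3 -> Gv (mk f1 f2 f3) = 0.
  by move=> f1 f2 f3 H; apply/GvE; rewrite c1_mk c2_mk c3_mk.
have [u [Gu Hu]] : exists u, Gv u = 0 /\ forall w, Gv w = 0 -> Bv u w = Lv w.
  apply: gen_exist.
  - move=> a x y w; rewrite /Bv.
    rewrite (E1_linl v X1 X2 dt _ _ _ _ _ _ _ _ _ _ (c1_lin a x y) (c2_lin a x y) (c3_lin a x y)).
    rewrite (E2_linl v X1 X2 _ _ _ _ _ _ _ _ _ _ (c1_lin a x y) (c2_lin a x y) (c3_lin a x y)).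
    ring.
  - move=> a x w z; rewrite /Bv.
    rewrite (E1_linr v X1 X2 dt _ _ _ _ (c3_lin a w z)).
    rewrite (E2_linr v X1 X2 _ _ _ _ _ _ _ (c1_lin a w z) (c2_lin a w z)).
    ring.
  - move=> a w z; rewrite /Lv.
    exact: (Rhs_lin dom bc rh X1 X2 _ _ _ _ _ _ _ (c1_lin a w z) (c2_lin a w z)).
  - move=> a x y; apply/rowP => i; rewrite !mxE.
    exact: (gl_lin v dom bc (c1_lin a x y) (c2_lin a x y) (c3_lin a x y)).
  - move=> u Gu Hw; have [Hd Hk] := proj1 (GvE u) Gu.
    have Zc : forall i, c1 u i = 0 /\ c2 u i = 0 /\ c3 u i = 0.
      apply: (coer dt HJ HX HA HC Hdt (c3 u) Hd Hk) => f1 f2 f3 Hf Hf3.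
      by have := Hw (mk f1 f2 f3) (Gmk _ _ _ (conj Hf Hf3)); rewrite /Bv c1_mk c2_mk c3_mk.
    rewrite -(mk_c u); apply: mk0 => i; by have [? [? ?]] := Zc i.
have [Hd Hk] := proj1 (GvE u) Gu.
exists (c1 u), (c2 u), (c3 u); split => //; split => //.
apply/scheme_iff; split.
  move=> ch Hch; have := Hu (mk Z Z ch) (Gmk _ _ _ (conj ZVd Hch)).
  rewrite /Bv /Lv c1_mk c2_mk c3_mk.
  rewrite (E2_0 _ _ _ _ _ _ _ _ (fun=> erefl) (fun=> erefl)).
  by rewrite (Rhs_0 _ _ _ _ _ _ _ (fun=> erefl) (fun=> erefl)) addr0.
have ZW0 : forall w, inW w dom bc Z by case; do !split.
have ZW := ZW0 v.
move=> e1 e2 He; have := Hu (mk e1 e2 Z) (Gmk _ _ _ (conj He ZW)).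
by rewrite /Bv /Lv c1_mk c2_mk c3_mk (E1_0 _ _ _ _ _ _ _ _ (fun=> erefl)) add0r.
Qed.
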